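(* Let $(X,\Sigma)$ be a measurable space, $(\mathcal{E}_t)_{t\ge0}$ a process of pavings, $\mathscr{A}=\{\mathsf{A}_t(\cdot|E)\colon E\in\mathcal{E}_t,\,t\ge0\}$ a parametric family of conditional aggregation operators, $f\in\mathbf{F}$ and $\boldsymbol{\mu}=(\mu_t)_{t\ge0}$ a family of monotone measures on $\Sigma$. Then: (a) for fixed $t\ge0$, $\boldsymbol{\mu}_{\mathscr{A}}(f,t)=0$ if and only if $\mu_t(E)=0$ for every $E\in\mathcal{E}_t^0$ such that $\mathsf{A}_t(f|E)\ge t$; (b) if $\mathsf{A}_t(\lambda\mathbf{1}_X|E)\le\lambda$ for every $E\in\mathcal{E}_t^0$ and all $t,\lambda\ge0$, then there exists $b>0$ such that $\boldsymbol{\mu}_{\mathscr{A}}(f,t)=0$ for each $t>b$.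
   Context: $\Sigma^0=\Sigma\setminus\{\emptyset\}$. $\mathbf{F}$ denotes the set of all $\Sigma$-measurable, nonnegative, bounded functions $f\colon X\to[0,\infty)$. A monotone measure is a map $\mu\colon\Sigma\to[0,\infty]$ with $\mu(B)\le\mu(C)$ whenever $B\subseteq C$, $\mu(\emptyset)=0$ and $\mu(X)>0$. For $E\in\Sigma^0$, a conditional aggregation operator (CAO) w.r.t. $E$ is a map $\mathsf{A}(\cdot|E)\colon\mathbf{F}\to[0,\infty]$ such that (C1) $\mathsf{A}(f|E)\le\mathsf{A}(g|E)$ whenever $f(x)\le g(x)$ for all $x\in E$, and (C2) $\mathsf{A}(\mathbf{1}_{X\setminus E}|E)=0$. A process of pavings is a family $(\mathcal{E}_t)_{t\ge0}$ with $\emptyset\in\mathcal{E}_t\subseteq\Sigma$ for all $t$; $\mathcal{E}_t^0=\mathcal{E}_t\setminus\{\emptyset\}$. A parametric family of CAOs (pFCA) $\{\mathsf{A}_t(\cdot|E)\colon E\in\mathcal{E}_t,\,t\ge0\}$ consists of CAOs $\mathsf{A}_t(\cdot|E)$ w.r.t. $E$ for each $t$ and $E\in\mathcal{E}_t^0$, with the convention $\mathsf{A}_t(\cdot|\emptyset)=\infty$. The generalized level measure is $\boldsymbol{\mu}_{\mathscr{A}}(f,t)=\sup\{\mu_t(E)\colon \mathsf{A}_t(f|E)\ge t,\ E\in\mathcal{E}_t\}$ for $t\ge0$. *)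

(* Defs.v *)
From mathcomp Require Import all_boot all_order all_algebra.
From mathcomp Require Import all_classical all_reals all_analysis.
Set Implicit Arguments. Unset Strict Implicit. Unset Printing Implicit Defensive.
Import Order.TTheory GRing.Theory Num.Theory.
Local Open Scope classical_set_scope.
Local Open Scope ring_scope.
Local Open Scope ereal_scope.

Section Defs.
Context {d : measure_display} {X : measurableType d} {R : realType}.

Definition inF (f : X -> R) : Prop :=
  measurable_fun setT f /\ (forall x, (0 <= f x)%R) /\
  exists M : R, forall x, (f x <= M)%R.

Definition monotone_measure (mu : set X -> \bar R) : Prop :=
  (forall B, 0 <= mu B) /\
  (forall B C, measurable B -> measurable C -> B `<=` C -> mu B <= mu C) /\
  mu set0 = 0 /\ 0 < mu setT.

Definition CAO (A : (X -> R) -> \bar R) (E : set X) : Prop :=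
  (forall f, inF f -> 0 <= A f) /\
  (forall f g, inF f -> inF g -> (forall x, E x -> (f x <= g x)%R) -> A f <= A g) /\
  A (\1_(~` E) : X -> R) = 0.

Definition paving_process (Ecal : R -> set (set X)) : Prop :=
  forall t, (0 <= t)%R -> Ecal t set0 /\ Ecal t `<=` measurable.

(* parametric family of CAOs, with the convention A_t(.|emptyset) = +oo *)
Definition pFCA (Ecal : R -> set (set X)) (A : R -> set X -> (X -> R) -> \bar R)
  : Prop :=
  forall t, (0 <= t)%R ->
    (forall E, Ecal t E -> E <> set0 -> CAO (A t E) E) /\
    (forall f, A t set0 f = +oo).

Definition level_measure (Ecal : R -> set (set X))
  (A : R -> set X -> (X -> R) -> \bar R) (mu : R -> set X -> \bar R)
  (f : X -> R) (t : R) : \bar R :=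
  ereal_sup [set mu t E | E in [set E | Ecal t E /\ t%:E <= A t E f]].

End Defs.

(* Main.v *)
Require Import Defs.
From mathcomp Require Import all_boot all_order all_algebra.
From mathcomp Require Import all_classical all_reals all_analysis.
Import Order.TTheory GRing.Theory Num.Theory.
Local Open Scope classical_set_scope.
Local Open Scope ring_scope.
Local Open Scope ereal_scope.

Theorem proposition3p7 (d : measure_display) (X : measurableType d) (R : realType)
  (Ecal : R -> set (set X)) (A : R -> set X -> (X -> R) -> \bar R)
  (mu : R -> set X -> \bar R) (f : X -> R) :
  paving_process Ecal -> pFCA Ecal A -> inF f ->
  (forall t, (0 <= t)%R -> monotone_measure (mu t)) ->
  (forall t, (0 <= t)%R ->
     (level_measure Ecal A mu f t = 0 <->
      (forall E, Ecal t E -> E <> set0 -> t%:E <= A t E f -> mu t E = 0))) /\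
  ((forall t lam, (0 <= t)%R -> (0 <= lam)%R ->
      forall E, Ecal t E -> E <> set0 -> A t E (fun _ => lam) <= lam%:E) ->
   exists b : R, (0 < b)%R /\
     forall t, (b < t)%R -> level_measure Ecal A mu f t = 0).
Proof.
move=> hE hA hf hmu.
have partA : forall t, (0 <= t)%R ->
     (level_measure Ecal A mu f t = 0 <->
      (forall E, Ecal t E -> E <> set0 -> t%:E <= A t E f -> mu t E = 0)).
  move=> t t0; have [hm0 [_ [hm1 _]]] := hmu t t0.
  split.
  - move=> hl E hEt hne htA; apply/eqP; rewrite eq_le hm0 andbT -hl.
    by apply: ereal_sup_ubound; exists E.
  - move=> H; apply/eqP; rewrite eq_le; apply/andP; split.
    + apply: ge_ereal_sup => _ [E [hEt htA] <-].
      have [->|hne] := eqVneq E set0; first by rewrite hm1.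
      have hne2 : E <> set0 by move=> e; move: hne; rewrite e eqxx.
      by rewrite (H E hEt hne2 htA).
    + apply: ereal_sup_ubound; exists set0; last exact: hm1; split.
      * by have [] := hE t t0.
      * by have [_ ->] := hA t t0; rewrite leey.
split=> // hcst.
have [fm [f0 [M hM]]] := hf.
set M' := Num.max M 0%R.
exists (M' + 1)%R; split.
  by apply: (lt_le_trans ltr01); rewrite lerDr /M' le_max lexx orbT.
move=> t ht.
have M'0 : (0 <= M')%R by rewrite /M' le_max lexx orbT.
have t0 : (0 <= t)%R.
  by apply: ltW; apply: (le_lt_trans _ ht); apply: addr_ge0.
apply/(partA t t0) => E hEt hne htA; exfalso.
have [hCAO _] := hA t t0.
have [_ [mono _]] := hCAO E hEt hne.
have hcF : inF (fun _ : X => M').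
  split; first exact: measurable_cst.
  by split=> // ; exists M'.
have := mono f (fun _ => M') hf hcF.
have le : forall x, E x -> (f x <= M')%R.
  by move=> x _; rewrite /M' le_max hM.
move=> /(_ le) hle.
have := le_trans htA (le_trans hle (hcst t M' t0 M'0 E hEt hne)).
rewrite lee_fin => htM.
have : (t <= M' + 1)%R by apply: (le_trans htM); rewrite lerDl.
by rewrite leNgt ht.
Qed.
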